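(* Let $0\le m<a<M\le1$, $k\ge0$ and $b,c>1$, and let $\omega(t)=-kt-(b-1)\ln t-(c-1)\ln(1-t)$ for $0<t<1$. (i) If $\omega'(a)>0$, then $$\int_a^M e^{-\omega(t)}\,dt\le\frac{e^{ka}a^{b-1}(1-a)^{c-1}}{\omega'(a)}$$ and $$\int_a^M e^{-\omega(t)}\,dt\ge\frac{e^{ka}a^{b-1}(1-a)^{c-1}}{\omega'(M)}\left(1-\exp\{-(M-a)\omega'(a)\}\right).$$ (ii) If $\omega'(a)<0$, then $$\int_m^a e^{-\omega(t)}\,dt\le\frac{e^{ka}a^{b-1}(1-a)^{c-1}}{-\omega'(a)}$$ and $$\int_m^a e^{-\omega(t)}\,dt\ge\frac{e^{ka}a^{b-1}(1-a)^{c-1}}{-\omega'(m)}\left(1-\exp\{(a-m)\omega'(a)\}\right).$$ *)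

(* Defs.v *)
From Stdlib Require Import Reals.
From Coquelicot Require Import Coquelicot.
Open Scope R_scope.

Definition omega (k b c : R) (t : R) : R :=
  - k * t - (b - 1) * ln t - (c - 1) * ln (1 - t).

Definition pref (k b c a : R) : R :=
  exp (k * a) * Rpower a (b - 1) * Rpower (1 - a) (c - 1).

(* Main.v *)
Require Import Defs.
From Stdlib Require Import Reals Lra.
From Coquelicot Require Import Coquelicot.
Open Scope R_scope.

Definition Dw (k b c t : R) : R := - k - (b - 1) / t + (c - 1) / (1 - t).

Lemma omega_deriv k b c t : 0 < t < 1 -> is_derive (omega k b c) t (Dw k b c t).
Proof.
  intros [h0 h1]. unfold omega, Dw. auto_derive.
  - lra.
  - field; lra.
Qed.

Lemma Derive_omega k b c t : 0 < t < 1 -> Derive (omega k b c) t = Dw k b c t.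
Proof. intros h; apply is_derive_unique, omega_deriv, h. Qed.

Lemma Dw_mono k b c s t : 1 < b -> 1 < c -> 0 < s -> s <= t -> t < 1 ->
  Dw k b c s <= Dw k b c t.
Proof.
  intros hb hc hs hst ht. unfold Dw, Rdiv.
  assert (/ t <= / s) by (apply Rinv_le_contravar; lra).
  assert (/ (1 - s) <= / (1 - t)) by (apply Rinv_le_contravar; lra).
  assert ((b-1) * / t <= (b-1) * / s) by (apply Rmult_le_compat_l; lra).
  assert ((c-1) * / (1-s) <= (c-1) * / (1-t)) by (apply Rmult_le_compat_l; lra).
  lra.
Qed.

Lemma omega_cont k b c t : 0 < t < 1 -> continuity_pt (omega k b c) t.
Proof.
  intros h. apply continuity_pt_filterlim. apply (ex_derive_continuous (omega k b c)).
  eexists. apply omega_deriv, h.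
Qed.

Lemma convex k b c s t : 1 < b -> 1 < c -> 0 < s < 1 -> 0 < t < 1 ->
  omega k b c s + Dw k b c s * (t - s) <= omega k b c t.
Proof.
  intros hb hc hs ht.
  destruct (MVT_gen (fun x => omega k b c x - Dw k b c s * x) s t
     (fun x => Dw k b c x - Dw k b c s)) as [xi [Hxi Heq]].
  - intros x Hx. unfold Rmin, Rmax in Hx.
    assert (0 < x < 1) by (destruct (Rle_dec s t); lra).
    unfold omega, Dw. auto_derive. lra. field; lra.
  - intros x Hx. apply continuity_pt_minus.
    + apply omega_cont. unfold Rmin, Rmax in Hx. destruct (Rle_dec s t); lra.
    + apply continuity_pt_mult. apply continuity_pt_const. intros u v; reflexivity.
      apply continuity_pt_id.
  - unfold Rmin, Rmax in Hxi. destruct (Rle_dec s t).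
    + assert (Dw k b c s <= Dw k b c xi) by (apply Dw_mono; lra).
      assert (0 <= (Dw k b c xi - Dw k b c s) * (t - s)) by (apply Rmult_le_pos; lra).
      lra.
    + assert (Dw k b c xi <= Dw k b c s) by (apply Dw_mono; lra).
      assert (0 <= (Dw k b c s - Dw k b c xi) * (s - t)) by (apply Rmult_le_pos; lra).
      lra.
Qed.

Definition Pw (e u : R) : R := if Rlt_dec 0 u then exp ((e - 1) * ln u) else 0.

Lemma Pw_cont e u : 1 < e -> 0 <= u -> continuous (Pw e) u.
Proof.
  intros he hu. destruct (Rle_lt_or_eq_dec 0 u hu) as [hp | h0].
  - apply (continuous_ext_loc (Pw e) (fun y => exp ((e - 1) * ln y))).
    + exists (mkposreal u hp). intros y Hy. cbn in Hy.
      unfold ball in Hy; cbn in Hy; unfold AbsRing_ball, abs, minus, plus, opp in Hy; cbn in Hy.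
      unfold Pw. destruct (Rlt_dec 0 y) as [_|n]; [reflexivity|].
      exfalso. apply Rabs_def2 in Hy. lra.
    + apply (ex_derive_continuous (fun y => exp ((e - 1) * ln y))).
      auto_derive. lra.
  - subst u. apply continuity_pt_filterlim.
    intros eps Heps.
    exists (exp (ln eps / (e - 1))). split; [apply exp_pos|].
    intros x [_ Hx]. cbn in Hx |- *. unfold R_dist in *.
    unfold Pw. destruct (Rlt_dec 0 0) as [h|_]; [lra|].
    destruct (Rlt_dec 0 x) as [hx|hx].
    + rewrite Rminus_0_r, Rabs_pos_eq by (left; apply exp_pos).
      rewrite Rminus_0_r, Rabs_pos_eq in Hx by lra.
      assert (ln x < ln eps / (e - 1)).
      { rewrite <- (ln_exp (ln eps / (e - 1))). apply ln_increasing; lra. }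
      assert ((e - 1) * ln x < ln eps).
      { replace (ln eps) with ((e - 1) * (ln eps / (e - 1))) by (field; lra).
        apply Rmult_lt_compat_l; lra. }
      rewrite <- (exp_ln eps) by lra. apply exp_increasing. lra.
    + rewrite Rminus_0_r, Rabs_R0. lra.
Qed.

Definition Gw (k b c t : R) : R := exp (k * t) * Pw b t * Pw c (1 - t).

Lemma Gw_cont k b c t : 1 < b -> 1 < c -> 0 <= t <= 1 -> continuous (Gw k b c) t.
Proof.
  intros hb hc ht. unfold Gw.
  apply (continuous_mult (fun t => exp (k * t) * Pw b t) (fun t => Pw c (1 - t))).
  - apply (continuous_mult (fun t => exp (k * t)) (Pw b)).
    + apply (ex_derive_continuous (fun t => exp (k * t))). auto_derive. easy.
    + apply Pw_cont; lra.
  - apply (continuous_comp (fun t => 1 - t) (Pw c)).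
    + apply (ex_derive_continuous (fun t => 1 - t)). auto_derive. easy.
    + apply Pw_cont; lra.
Qed.

Lemma F_eq_G k b c t : 0 < t < 1 -> exp (- omega k b c t) = Gw k b c t.
Proof.
  intros ht. unfold Gw, Pw, omega.
  destruct (Rlt_dec 0 t); [|lra]. destruct (Rlt_dec 0 (1 - t)); [|lra].
  rewrite <- !exp_plus. f_equal. ring.
Qed.

Lemma pref_eq k b c a : 0 < a < 1 -> pref k b c a = exp (- omega k b c a).
Proof.
  intros ha. rewrite F_eq_G by lra. unfold pref, Gw, Pw, Rpower.
  destruct (Rlt_dec 0 a); [|lra]. destruct (Rlt_dec 0 (1 - a)); [|lra].
  reflexivity.
Qed.

Lemma F_int k b c x y : 1 < b -> 1 < c -> 0 <= x -> x <= y -> y <= 1 ->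
  ex_RInt (fun t => exp (- omega k b c t)) x y.
Proof.
  intros hb hc hx hxy hy.
  apply (ex_RInt_ext (Gw k b c)).
  - intros t Ht. rewrite Rmin_left, Rmax_right in Ht by lra.
    symmetry. apply F_eq_G. lra.
  - apply (@ex_RInt_continuous R_CompleteNormedModule). intros z Hz.
    rewrite Rmin_left, Rmax_right in Hz by lra. apply Gw_cont; lra.
Qed.

Lemma E_int p W a x y : W <> 0 ->
  is_RInt (fun t => p * exp (- (W * (t - a)))) x y
    (p / W * (exp (- (W * (x - a))) - exp (- (W * (y - a))))).
Proof.
  intros hW.
  assert (H := is_RInt_derive (fun t => - p / W * exp (- (W * (t - a))))
                 (fun t => p * exp (- (W * (t - a)))) x y).
  replace (p / W * (exp (- (W * (x - a))) - exp (- (W * (y - a))))) with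
    (minus (- p / W * exp (- (W * (y - a)))) (- p / W * exp (- (W * (x - a))))).
  - apply H.
    + intros t _. auto_derive; [easy|]. replace (t + - a) with (t - a) by ring. field. exact hW.
    + intros t _. apply (ex_derive_continuous (fun t => p * exp (- (W * (t - a))))).
      auto_derive. easy.
  - unfold minus, plus, opp; simpl. field. exact hW.
Qed.

Lemma FD_int k b c x y : 0 < x -> x <= y -> y < 1 ->
  is_RInt (fun t => exp (- omega k b c t) * Dw k b c t) x y
    (exp (- omega k b c x) - exp (- omega k b c y)).
Proof.
  intros hx hxy hy.
  assert (H := is_RInt_derive (fun t => - exp (- omega k b c t))
                 (fun t => exp (- omega k b c t) * Dw k b c t) x y).
  replace (exp (- omega k b c x) - exp (- omega k b c y)) with
    (minus (- exp (- omega k b c y)) (- exp (- omega k b c x))).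
  - apply H.
    + intros t Ht. rewrite Rmin_left, Rmax_right in Ht by lra.
      unfold omega, Dw. auto_derive; [lra|]. replace (1 + - t) with (1 - t) by ring. replace (- k * t + - ((b - 1) * ln t) + - ((c - 1) * ln (1 - t))) with (- k * t - (b - 1) * ln t - (c - 1) * ln (1 - t)) by ring. field. lra.
    + intros t Ht. rewrite Rmin_left, Rmax_right in Ht by lra.
      apply (ex_derive_continuous (fun t => exp (- omega k b c t) * Dw k b c t)).
      unfold omega, Dw. auto_derive. lra.
  - unfold minus, plus, opp; simpl. ring.
Qed.

Lemma exp_le' x y : x <= y -> exp x <= exp y.
Proof. intros h. destruct (Rle_lt_or_eq_dec _ _ h) as [h' | ->]. left; apply exp_increasing, h'. right; reflexivity. Qed.

Lemma FD_int_s k b c w x y : 0 < x -> x <= y -> y < 1 ->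
  is_RInt (fun t => / w * (exp (- omega k b c t) * Dw k b c t)) x y
    (/ w * (exp (- omega k b c x) - exp (- omega k b c y))).
Proof.
  intros hx hxy hy.
  exact (@is_RInt_scal R_NormedModule _ x y (/ w) _ (FD_int k b c x y hx hxy hy)).
Qed.

Lemma F_upper k b c a t : 1 < b -> 1 < c -> 0 < a < 1 -> 0 < t < 1 ->
  exp (- omega k b c t) <= pref k b c a * exp (- (Dw k b c a * (t - a))).
Proof.
  intros hb hc ha ht. rewrite pref_eq by lra. rewrite <- exp_plus. apply exp_le'.
  pose proof (convex k b c a t hb hc ha ht). lra.
Qed.

Theorem lemma4 (m a M k b c : R)
  (hm : 0 <= m) (hma : m < a) (haM : a < M) (hM : M <= 1)
  (hk : 0 <= k) (hb : 1 < b) (hc : 1 < c) :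
  (0 < Derive (omega k b c) a ->
     RInt (fun t => exp (- omega k b c t)) a M
       <= pref k b c a / Derive (omega k b c) a
     /\
     RInt (fun t => exp (- omega k b c t)) a M
       >= (if Rlt_dec M 1 then
             pref k b c a / Derive (omega k b c) M
             * (1 - exp (- ((M - a) * Derive (omega k b c) a)))
           else 0))
  /\
  (Derive (omega k b c) a < 0 ->
     RInt (fun t => exp (- omega k b c t)) m a
       <= pref k b c a / (- Derive (omega k b c) a)
     /\
     RInt (fun t => exp (- omega k b c t)) m a
       >= (if Rlt_dec 0 m then
             pref k b c a / (- Derive (omega k b c) m)
             * (1 - exp ((a - m) * Derive (omega k b c) a))
           else 0)).
Proof.
  assert (ha : 0 < a < 1) by lra.
  rewrite (Derive_omega k b c a ha).
  set (W := Dw k b c a).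
  set (F := fun t => exp (- omega k b c t)).
  assert (Fpos : forall t, 0 < F t) by (intros; apply exp_pos).
  assert (pref_pos : 0 < pref k b c a) by (rewrite pref_eq by lra; apply exp_pos).
  split; intros hW.
  - split.
    + assert (HE := E_int (pref k b c a) W a a M ltac:(lra)).
      apply Rle_trans with (RInt (fun t => pref k b c a * exp (- (W * (t - a)))) a M).
      * apply RInt_le; [lra| apply F_int; lra | eexists; exact HE |].
        intros t Ht. apply F_upper; lra.
      * rewrite (is_RInt_unique _ _ _ _ HE).
        rewrite Rminus_diag, Rmult_0_r, Ropp_0, exp_0.
        pose proof (exp_pos (- (W * (M - a)))).
        assert (0 < pref k b c a / W) by (apply Rdiv_lt_0_compat; lra).
        unfold Rdiv in *. nra.
    + destruct (Rlt_dec M 1) as [hM1|hM1].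
      * rewrite (Derive_omega k b c M) by lra.
        set (WM := Dw k b c M).
        assert (hWM : W <= WM) by (apply Dw_mono; lra).
        assert (HI := FD_int_s k b c WM a M ltac:(lra) ltac:(lra) hM1).
        apply Rle_ge.
        apply Rle_trans with (RInt (fun t => / WM * (exp (- omega k b c t) * Dw k b c t)) a M).
        -- rewrite (is_RInt_unique _ _ _ _ HI).
           pose proof (F_upper k b c a M hb hc ha ltac:(lra)).
           rewrite <- (pref_eq k b c a) by lra.
           replace (- ((M - a) * W)) with (- (W * (M - a))) by ring.
           assert (0 < / WM) by (apply Rinv_0_lt_compat; lra).
           fold W in H. unfold Rdiv. nra.
        -- apply RInt_le; [lra| eexists; exact HI | apply F_int; lra |].
           intros t Ht.
           assert (W <= Dw k b c t) by (apply Dw_mono; lra).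
           assert (Dw k b c t <= WM) by (apply Dw_mono; lra).
           assert (/ WM * Dw k b c t <= 1).
           { rewrite <- (Rinv_l WM) by lra. apply Rmult_le_compat_l; [|lra].
             left; apply Rinv_0_lt_compat; lra. }
           assert (0 < / WM * Dw k b c t).
           { apply Rmult_lt_0_compat; [apply Rinv_0_lt_compat|]; lra. }
           pose proof (Fpos t). unfold F in *. nra.
      * apply Rle_ge. apply RInt_ge_0; [lra| apply F_int; lra|].
        intros; left; apply exp_pos.
  - split.
    + assert (HE := E_int (pref k b c a) W a m a ltac:(lra)).
      apply Rle_trans with (RInt (fun t => pref k b c a * exp (- (W * (t - a)))) m a).
      * apply RInt_le; [lra| apply F_int; lra | eexists; exact HE |].
        intros t Ht. apply F_upper; lra.
      * rewrite (is_RInt_unique _ _ _ _ HE).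
        rewrite Rminus_diag, Rmult_0_r, Ropp_0, exp_0.
        pose proof (exp_pos (- (W * (m - a)))).
        assert (0 < pref k b c a / - W) by (apply Rdiv_lt_0_compat; lra).
        replace (pref k b c a / W) with (- (pref k b c a / - W)) by (field; lra).
        unfold Rdiv in *. nra.
    + destruct (Rlt_dec 0 m) as [hm0|hm0].
      * rewrite (Derive_omega k b c m) by lra.
        set (Wm := Dw k b c m).
        assert (hWm : Wm <= W) by (apply Dw_mono; lra).
        assert (HI := FD_int_s k b c Wm m a hm0 ltac:(lra) ltac:(lra)).
        apply Rle_ge.
        apply Rle_trans with (RInt (fun t => / Wm * (exp (- omega k b c t) * Dw k b c t)) m a).
        -- rewrite (is_RInt_unique _ _ _ _ HI).
           pose proof (F_upper k b c a m hb hc ha ltac:(lra)). fold W in H.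
           rewrite <- (pref_eq k b c a) by lra.
           replace ((a - m) * W) with (- (W * (m - a))) by ring.
           assert (0 < / - Wm) by (apply Rinv_0_lt_compat; lra).
           replace (/ Wm) with (- / - Wm) by (field; lra).
           unfold Rdiv. nra.
        -- apply RInt_le; [lra| eexists; exact HI | apply F_int; lra |].
           intros t Ht.
           assert (Dw k b c t <= W) by (apply Dw_mono; lra).
           assert (Wm <= Dw k b c t) by (apply Dw_mono; lra).
           assert (/ Wm * Dw k b c t <= 1).
           { replace (/ Wm * Dw k b c t) with (/ - Wm * - Dw k b c t) by (field; lra).
             rewrite <- (Rinv_l (- Wm)) by lra. apply Rmult_le_compat_l; [|lra].
             left; apply Rinv_0_lt_compat; lra. }
           assert (0 < / Wm * Dw k b c t).
           { replace (/ Wm * Dw k b c t) with (/ - Wm * - Dw k b c t) by (field; lra).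
             apply Rmult_lt_0_compat; [apply Rinv_0_lt_compat|]; lra. }
           pose proof (Fpos t). unfold F in *. nra.
      * apply Rle_ge. apply RInt_ge_0; [lra| apply F_int; lra|].
        intros; left; apply exp_pos.
Qed.
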